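(* Let $R$ be an axis-aligned rectangle containing $O(n)$ sites in its interior, with $O(n)$ ports on its top side and right side. Let $W$ be the set of intersection points of the horizontal and vertical lines through the sites and ports. For $w\in W$, a candidate rectangle with bottom-left corner $w$ is an axis-aligned rectangle with bottom-left corner $w$ containing no site in its interior such that either (i) its right side passes through a site $s$ with $s_x>w_x$, $s_y>w_y$ and its top side lies on the horizontal line through a site lying above $s$, or (ii) symmetrically, its top side passes through a site $s$ with $s_x>w_x$, $s_y>w_y$ and its right side lies on the vertical line through a site lying to the right of $s$. Then the total number of distinct candidate rectangles over all $w\in W$ is $O(n^3)$.
   Context: For a point $p$, $p_x$ and $p_y$ denote its $x$- and $y$-coordinates. *)

(* Defs.v *)
From mathcomp Require Import all_boot all_order all_algebra.
Set Implicit Arguments. Unset Strict Implicit. Unset Printing Implicit Defensive.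
Import Order.TTheory GRing.Theory Num.Theory.
Local Open Scope ring_scope.

Section Defs.
Variable R : realFieldType.
Notation pt := (R * R)%type.

Definition in_open_rect (xl xr yb yt : R) (p : pt) : bool :=
  (xl < p.1) && (p.1 < xr) && (yb < p.2) && (p.2 < yt).

Definition on_top_or_right (xl xr yb yt : R) (p : pt) : bool :=
  ((p.2 == yt) && (xl <= p.1) && (p.1 <= xr)) ||
  ((p.1 == xr) && (yb <= p.2) && (p.2 <= yt)).

Definition in_W (sites ports : seq pt) (w : pt) : Prop :=
  exists p q, p \in sites ++ ports /\ q \in sites ++ ports /\ w = (p.1, q.2).

(* An axis-aligned rectangle is encoded by (bottom-left corner, top-right
   corner); [is_candidate sites w r] : r is a candidate rectangle with
   bottom-left corner w. *)
Definition is_candidate (sites : seq pt) (w : pt) (r : pt * pt) : Prop :=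
  let: (bl, tr) := r in
  [/\ bl = w, w.1 < tr.1, w.2 < tr.2,
      (forall s, s \in sites -> ~~ in_open_rect w.1 tr.1 w.2 tr.2 s) &
      ((exists s t, s \in sites /\ t \in sites /\ w.1 < s.1 /\ w.2 < s.2 /\
           s.1 = tr.1 /\ w.2 <= s.2 <= tr.2 /\ s.2 < t.2 /\ tr.2 = t.2)
       \/
       (exists s t, s \in sites /\ t \in sites /\ w.1 < s.1 /\ w.2 < s.2 /\
           s.2 = tr.2 /\ w.1 <= s.1 <= tr.1 /\ s.1 < t.1 /\ tr.1 = t.1))].

Definition is_candidate_any (sites ports : seq pt) (r : pt * pt) : Prop :=
  exists w, in_W sites ports w /\ is_candidate sites w r.

End Defs.

(* Main.v *)
Require Import Defs.
From mathcomp Require Import all_boot all_order all_algebra.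
From mathcomp Require Import ring.
Import Order.TTheory GRing.Theory Num.Theory.
Local Open Scope ring_scope.

Definition caseI {R : realFieldType} (sites : seq (R * R)) (w tr : R * R) : bool :=
  has (fun s => has (fun t => [&& w.1 < s.1, w.2 < s.2, s.1 == tr.1,
     s.2 < t.2 & tr.2 == t.2]) sites) sites.

Definition keyf {R : realFieldType} (sites : seq (R * R)) (r : (R * R) * (R * R)) :=
  if caseI sites r.1 r.2 then (r.1, (true, r.2.2)) else (r.1, (false, r.2.1)).

Lemma caseI_true {R : realFieldType} (sites : seq (R * R)) w tr :
  caseI sites w tr -> exists s, s \in sites /\ w.1 < s.1 /\ w.2 < s.2 /\
     s.1 = tr.1 /\ s.2 < tr.2.
Proof.
case/hasP=> s Hs /hasP [t Ht] /and5P [h1 h2 /eqP h3 h4 /eqP h5].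
by exists s; rewrite h5.
Qed.

Lemma caseII_of {R : realFieldType} (sites : seq (R * R)) w tr :
  is_candidate sites w (w, tr) -> ~~ caseI sites w tr ->
  exists s, s \in sites /\ w.1 < s.1 /\ w.2 < s.2 /\ s.2 = tr.2 /\ s.1 < tr.1
    /\ exists t, t \in sites /\ tr.1 = t.1.
Proof.
case=> _ _ _ _ [[s [t [Hs [Ht [h1 [h2 [h3 [_ [h4 h5]]]]]]]]]|].
  move/negP; case; apply/hasP; exists s => //; apply/hasP; exists t => //.
  by rewrite h1 h2 h3 h4 h5 !eqxx.
move=> [s [t [Hs [Ht [h1 [h2 [h3 [_ [h4 h5]]]]]]]]].
by exists s; rewrite h5; do 5 (split => //); exists t.
Qed.

Lemma key_inj {R : realFieldType} (sites ports : seq (R * R)) r r' :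
  is_candidate_any sites ports r -> is_candidate_any sites ports r' ->
  keyf sites r = keyf sites r' -> r = r'.
Proof.
case: r => w tr; case: r' => w' tr' [w0 [_ Hc]] [w0' [_ Hc']].
have Ew : w = w0 by case: Hc.
have Ew' : w' = w0' by case: Hc'.
subst w0 w0'.
rewrite /keyf /=.
case E1: (caseI sites w tr); case E2: (caseI sites w' tr') => //=.
- case=> Eww Eh; subst w'.
  congr pair; case: tr tr' Hc Hc' E1 E2 Eh => x1 h [x2 h'] Hc Hc' E1 E2 /= Eh.
  subst h'; congr pair.
  have [s [Hs [a1 [a2 [a3 a4]]]]] := caseI_true _ _ _ E1.
  have [s' [Hs' [b1 [b2 [b3 b4]]]]] := caseI_true _ _ _ E2.
  case: Hc => _ _ _ He _; case: Hc' => _ _ _ He' _.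
  simpl in *.
  case: (ltgtP x1 x2) => // Hx.
  + have := He' s Hs; rewrite /in_open_rect a1 a2 a4 a3 Hx //.
  + have := He s' Hs'; rewrite /in_open_rect b1 b2 b4 b3 Hx //.
- case=> Eww Eh; subst w'.
  congr pair; case: tr tr' Hc Hc' E1 E2 Eh => x1 h [x2 h'] Hc Hc' E1 E2 /= Eh.
  subst x2; congr pair.
  have [s [Hs [a1 [a2 [a3 [a4 _]]]]]] := caseII_of _ _ _ Hc (negbT E1).
  have [s' [Hs' [b1 [b2 [b3 [b4 _]]]]]] := caseII_of _ _ _ Hc' (negbT E2).
  case: Hc => _ _ _ He _; case: Hc' => _ _ _ He' _.
  simpl in *.
  case: (ltgtP h h') => // Hx.
  + have := He' s Hs; rewrite /in_open_rect a1 a2 a4 a3 Hx //.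
  + have := He s' Hs'; rewrite /in_open_rect b1 b2 b4 b3 Hx //.
Qed.

Theorem lemma4 (R : realFieldType) (c : nat) :
  exists C : nat, forall (n : nat) (xl xr yb yt : R)
    (sites ports : seq (R * R)) (cands : seq ((R * R) * (R * R))),
    xl < xr -> yb < yt ->
    (size sites <= c * n)%N -> (size ports <= c * n)%N ->
    (forall s, s \in sites -> in_open_rect xl xr yb yt s) ->
    (forall p, p \in ports -> on_top_or_right xl xr yb yt p) ->
    uniq cands ->
    (forall r, r \in cands -> is_candidate_any sites ports r) ->
    (size cands <= C * n ^ 3)%N.
Proof.
exists (16 * c ^ 3)%N => n xl xr yb yt sites ports cands _ _ Hs Hp _ _ Hu Hc.
set P := sites ++ ports.
set V := [seq s.2 | s <- sites] ++ [seq s.1 | s <- sites].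
set Wl := [seq (p.1, q.2) | p <- P, q <- P].
set BV := [seq (b, v) | b <- [:: true; false], v <- V].
set L := [seq (w, bv) | w <- Wl, bv <- BV].
have -> : size cands = size [seq keyf sites r | r <- cands] by rewrite size_map.
apply: (@leq_trans (size L)).
  apply: uniq_leq_size.
    rewrite map_inj_in_uniq // => r r' Hr Hr'.
    exact: key_inj _ _ _ _ (Hc r Hr) (Hc r' Hr').
  move=> k /mapP [r Hr ->].
  have [w [[p [q [Hpp [Hq Ew]]]] Hcand]] := Hc r Hr.
  case: r Hr Hcand => bl tr Hr Hcand.
  have Ebl : bl = w by case: Hcand.
  subst bl.
  rewrite /keyf /=.
  have Wi : w \in Wl by rewrite Ew; apply: (allpairs_f (fun p q => (p.1, q.2))).
  case E1: (caseI sites w tr).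
  - apply: (allpairs_f (fun a b => (a, b))) => //.
    apply: (allpairs_f (fun a b => (a, b))); first by rewrite inE eqxx.
    case/hasP: E1 => s Hs1 /hasP [t Ht] /and5P [_ _ _ _ /eqP ->].
    by rewrite mem_cat; apply/orP; left; apply: map_f.
  - apply: (allpairs_f (fun a b => (a, b))) => //.
    apply: (allpairs_f (fun a b => (a, b))); first by rewrite !inE eqxx orbT.
    have [s [Hs1 [_ [_ [_ [_ [t [Ht ->]]]]]]]] := caseII_of _ _ _ Hcand (negbT E1).
    by rewrite mem_cat; apply/orP; right; apply: map_f.
rewrite !size_allpairs !size_cat !size_map /=.
have h1 : (size sites + size ports <= 2 * (c * n))%N.
  by rewrite mul2n -addnn leq_add.
have h2 : (2 * (size sites + size sites) <= 4 * (c * n))%N.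
  by rewrite -[4%N]/(2 * 2)%N -mulnA leq_mul2l /= mul2n -addnn leq_add.
apply: leq_trans (leq_mul (leq_mul h1 h1) h2) _.
apply: eq_leq; rewrite !expnS expn0 !muln1; ring.
Qed.
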